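(* Let $\kappa$ be a regular infinite cardinal, let $\eta > \kappa^{++}$ be an ordinal, and let $f = \langle \kappa_\xi : \xi < \eta\rangle$ be the cardinal sequence of some LCS space. Let $\alpha < \eta$ be an ordinal with $\mathrm{cf}(\alpha) > \kappa^+$ such that there is a strictly increasing sequence of ordinals $\langle \alpha_\xi : \xi < \mathrm{cf}(\alpha)\rangle$ converging to $\alpha$ with $\kappa_{\alpha_\xi} \le \kappa$ for every $\xi < \mathrm{cf}(\alpha)$. Then $\kappa_\alpha \le \kappa$.
   Context: An LCS space is a locally compact, Hausdorff, scattered topological space. For an LCS space $X$ and an ordinal $\alpha$, the $\alpha$-th Cantor–Bendixson level $I_\alpha(X)$ is the set of isolated points of $X \setminus \bigcup\{I_\beta(X) : \beta < \alpha\}$. The reduced height $\mathrm{ht}^-(X)$ is the least ordinal $\delta$ such that $I_\delta(X)$ is finite. The cardinal sequence of $X$ is $\mathrm{CS}(X) = \langle |I_\alpha(X)| : \alpha < \mathrm{ht}^-(X)\rangle$. A sequence $f$ of cardinals is ''the cardinal sequence of some LCS space'' if $f = \mathrm{CS}(X)$ for some LCS space $X$. *)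

(* Defs.v *)
From Stdlib Require Import List Classical.

Definition card_le (A B : Type) : Prop :=
  exists f : A -> B, forall x y, f x = f y -> x = y.
Definition card_lt (A B : Type) : Prop := card_le A B /\ ~ card_le B A.

Definition succ_card (A B : Type) : Prop :=
  card_lt A B /\ forall C : Type, card_lt C B -> card_le C A.

Definition finite_set {X : Type} (A : X -> Prop) : Prop :=
  exists l : list X, forall x, A x -> In x l.

Definition well_order {T : Type} (lt : T -> T -> Prop) : Prop :=
  (forall x, ~ lt x x) /\
  (forall x y z, lt x y -> lt y z -> lt x z) /\
  (forall x y, lt x y \/ x = y \/ lt y x) /\
  well_founded lt.

(* K (with its well-order ltK) is an infinite regular cardinal, presented as
   an initial ordinal: every proper initial segment has smaller cardinality,
   K is infinite, and every unbounded subset of K has cardinality |K|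
   (i.e. cf(kappa) = kappa). *)
Definition infinite_regular_cardinal (K : Type) (ltK : K -> K -> Prop) : Prop :=
  well_order ltK /\
  (forall k : K, card_lt {j : K | ltK j k} K) /\
  ~ finite_set (fun _ : K => True) /\
  (forall S : K -> Prop,
      (forall k, exists j, S j /\ ~ ltK j k) -> card_le K {j : K | S j}).

Definition cofinal_in {W : Type} (ltW : W -> W -> Prop) (alpha : W)
  (S : W -> Prop) : Prop :=
  (forall v, S v -> ltW v alpha) /\
  (forall u, ltW u alpha -> exists v, S v /\ ~ ltW v u).

Definition cf_gt {W : Type} (ltW : W -> W -> Prop) (alpha : W) (Kp : Type) : Prop :=
  forall S : W -> Prop, cofinal_in ltW alpha S -> ~ card_le {v : W | S v} Kp.

Record topology (X : Type) := {
  open : (X -> Prop) -> Prop;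
  open_full : open (fun _ => True);
  open_union : forall F : (X -> Prop) -> Prop,
      (forall U, F U -> open U) -> open (fun x => exists U, F U /\ U x);
  open_inter : forall U V, open U -> open V -> open (fun x => U x /\ V x)
}.
Arguments open {X} t U.

Definition compact {X : Type} (t : topology X) (C : X -> Prop) : Prop :=
  forall F : (X -> Prop) -> Prop,
    (forall U, F U -> open t U) ->
    (forall x, C x -> exists U, F U /\ U x) ->
    exists l : list (X -> Prop),
      (forall U, In U l -> F U) /\ (forall x, C x -> exists U, In U l /\ U x).

Definition hausdorff {X : Type} (t : topology X) : Prop :=
  forall x y, x <> y -> exists U V, open t U /\ open t V /\ U x /\ V y /\
    (forall z, U z -> V z -> False).

Definition locally_compact {X : Type} (t : topology X) : Prop :=
  forall x, exists U C, open t U /\ U x /\ (forall y, U y -> C y) /\ compact t C.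

Definition isolated_in {X : Type} (t : topology X) (A : X -> Prop) (x : X) : Prop :=
  A x /\ exists U, open t U /\ U x /\ (forall y, U y -> A y -> y = x).

Definition scattered {X : Type} (t : topology X) : Prop :=
  forall A : X -> Prop, (exists x, A x) -> exists x, isolated_in t A x.

Definition LCS {X : Type} (t : topology X) : Prop :=
  locally_compact t /\ hausdorff t /\ scattered t.

(* I is the family of Cantor-Bendixson levels of (X,t) indexed by the
   ordinals of the well-ordered type W:
   I w = isolated points of X \ U_{v<w} I v. *)
Definition CB_levels {X W : Type} (t : topology X) (ltW : W -> W -> Prop)
  (I : W -> X -> Prop) : Prop :=
  forall w x, I w x <-> isolated_in t (fun y => ~ exists v, ltW v w /\ I v y) x.

(* The cardinal sequence of (X,t) is <|I w| : w in W>, i.e. W has order type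
   ht^-(X): all levels indexed by W are infinite and the next level
   (isolated points of X \ U_{w in W} I w) is finite. *)
Definition is_cardinal_sequence {X W : Type} (t : topology X)
  (ltW : W -> W -> Prop) (I : W -> X -> Prop) : Prop :=
  CB_levels t ltW I /\
  (forall w, ~ finite_set (I w)) /\
  finite_set (isolated_in t (fun y => ~ exists w, I w y)).

(* Main.v *)
Require Import Defs.
From Stdlib Require Import List Classical ClassicalEpsilon FunctionalExtensionality PropExtensionality.

Lemma choice_fun {A B : Type} (R : A -> B -> Prop) :
  (forall a, exists b, R a b) -> exists f : A -> B, forall a, R a (f a).
Proof.
  intros H. exists (fun a => proj1_sig (constructive_indefinite_description _ (H a))).
  intros a. exact (proj2_sig (constructive_indefinite_description _ (H a))).
Qed.

Lemma card_le_trans A B C : card_le A B -> card_le B C -> card_le A C.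
Proof. intros [f Hf] [g Hg]. exists (fun x => g (f x)). auto. Qed.

Lemma sig_eq {A} {P : A -> Prop} (p q : {x | P x}) : proj1_sig p = proj1_sig q -> p = q.
Proof. destruct p as [x hx], q as [y hy]; simpl; intros ->. f_equal. apply proof_irrelevance. Qed.

Lemma card_le_image {D V : Type} (P : D -> Prop) (f : D -> V) :
  card_le {v : V | exists u, P u /\ v = f u} {u : D | P u}.
Proof.
  assert (H : forall p : {v : V | exists u, P u /\ v = f u}, {u : D | P u /\ proj1_sig p = f u}).
  { intros p. apply constructive_indefinite_description. exact (proj2_sig p). }
  exists (fun p => exist _ (proj1_sig (H p)) (proj1 (proj2_sig (H p)))).
  intros p q E. apply sig_eq.
  pose proof (f_equal (@proj1_sig _ _) E) as E1. simpl in E1.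
  rewrite (proj2 (proj2_sig (H p))), (proj2 (proj2_sig (H q))), E1. reflexivity.
Qed.

Lemma compact_closed_sub {X} (t : topology X) C M :
  compact t C -> open t M -> compact t (fun z => C z /\ ~ M z).
Proof.
  intros HC HM F HF Hcov.
  destruct (HC (fun U => F U \/ U = M)) as [l [Hl1 Hl2]].
  - intros U [H|H]; [auto| subst; auto].
  - intros x Cx. destruct (classic (M x)) as [Mx|nMx].
    + exists M; auto.
    + destruct (Hcov x (conj Cx nMx)) as [U [FU Ux]]. exists U; auto.
  - assert (Hf : exists l', (forall U, In U l' -> F U) /\ forall U, In U l -> F U -> In U l').
    { clear Hl1 Hl2. induction l as [|a l IH].
      - exists nil. simpl; tauto.
      - destruct IH as [l' [H1 H2]]. destruct (classic (F a)) as [Fa|nFa].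
        + exists (a :: l'). simpl. split; [intros U [<-|H]; auto | intros U [<-|H] FU; auto].
        + exists l'. split; auto. intros U [<-|H] FU; [contradiction|auto]. }
    destruct Hf as [l' [H1 H2]]. exists l'. split; auto.
    intros x [Cx nMx]. destruct (Hl2 x Cx) as [U [InU Ux]].
    destruct (Hl1 U InU) as [FU|EU].
    + exists U; auto.
    + subst; contradiction.
Qed.

Lemma sep_compact {X} (t : topology X) D y : hausdorff t -> compact t D -> ~ D y ->
  exists N M, open t N /\ open t M /\ N y /\ (forall z, D z -> M z) /\ (forall z, N z -> M z -> False).
Proof.
  intros Hh HD nDy.
  destruct (HD (fun B => open t B /\ exists A, open t A /\ A y /\ forall z, A z -> B z -> False))
    as [l [Hl1 Hl2]].
  - intros U [H _]; exact H.
  - intros z Dz. assert (y <> z) by (intros ->; contradiction).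
    destruct (Hh y z H) as [A [B [HA [HB [Ay [Bz Hd]]]]]].
    exists B. split; [split; [exact HB| exists A; auto] | exact Bz].
  - assert (HN : exists N, open t N /\ N y /\ forall B, In B l -> forall z, N z -> B z -> False).
    { clear Hl2. induction l as [|B l IH].
      - exists (fun _ => True). split; [apply open_full|]. split; [exact I|]. intros B [].
      - destruct (IH (fun U HU => Hl1 U (or_intror HU))) as [N [HN1 [HN2 HN3]]].
        destruct (Hl1 B (or_introl eq_refl)) as [_ [A [HA [Ay Hd]]]].
        exists (fun z => N z /\ A z). split; [apply open_inter; auto|]. split; [auto|].
        intros B' [<-|HB'] z [Nz Az] Bz; [eapply Hd; eauto | eapply HN3; eauto]. }
    destruct HN as [N [HN1 [HN2 HN3]]].
    exists N, (fun x => exists U, In U l /\ U x). split; [auto|]. split.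
    + apply open_union. intros U HU. apply (Hl1 U HU).
    + split; [auto|]. split; [intros z Dz; apply Hl2; auto|].
      intros z Nz [U [InU Uz]]. eapply HN3; eauto.
Qed.

Lemma regular_cpt {X} (t : topology X) y U : locally_compact t -> hausdorff t -> open t U -> U y ->
  exists V Q, open t V /\ V y /\ compact t Q /\ (forall z, V z -> Q z) /\ (forall z, Q z -> U z).
Proof.
  intros Hlc Hh HU Uy.
  destruct (Hlc y) as [O [C [HO [Oy [HOC HC]]]]].
  assert (HUO : open t (fun z => U z /\ O z)) by (apply open_inter; auto).
  pose proof (compact_closed_sub t C _ HC HUO) as HD.
  destruct (sep_compact t _ y Hh HD) as [N [M [HN [HM [Ny [HDM Hd]]]]]].
  { intros [_ H]. apply H; auto. }
  exists (fun z => N z /\ (U z /\ O z)), (fun z => C z /\ ~ M z).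
  split; [apply open_inter; auto|]. split; [auto|]. split; [apply compact_closed_sub; auto|]. split.
  - intros z [Nz [Uz Oz]]. split; [auto| intros Mz; eapply Hd; eauto].
  - intros z [Cz nMz]. destruct (classic (U z /\ O z)) as [[H _]|H]; [exact H|].
    exfalso. apply nMz. apply HDM. split; auto.
Qed.

Lemma level_unique {X W} (t : topology X) (ltW : W -> W -> Prop) I :
  well_order ltW -> CB_levels t ltW I -> forall u v z, I u z -> I v z -> u = v.
Proof.
  intros [_ [_ [Htri _]]] HCB u v z Hu Hv.
  destruct (Htri u v) as [H|[H|H]]; auto; exfalso.
  - apply HCB in Hv. destruct Hv as [Hv _]. apply Hv. exists u; auto.
  - apply HCB in Hu. destruct Hu as [Hu _]. apply Hu. exists v; auto.
Qed.

Definition Lop {X W} (ltW : W -> W -> Prop) (I : W -> X -> Prop) (b : W) (z : X) : Prop :=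
  exists u, ~ ltW b u /\ I u z.

Lemma Lop_open {X W} (t : topology X) (ltW : W -> W -> Prop) I :
  well_order ltW -> CB_levels t ltW I -> forall b, open t (Lop ltW I b).
Proof.
  intros Hw HCB b.
  assert (E : Lop ltW I b = (fun x => exists U, (open t U /\ forall z, U z -> Lop ltW I b z) /\ U x)).
  { apply functional_extensionality; intro x. apply propositional_extensionality. split.
    - intros [u [Hu Ix]]. pose proof Ix as Ix'. apply HCB in Ix'. destruct Ix' as [_ [O [HO [Ox HOx]]]].
      exists O. split; [split; [exact HO|] | exact Ox].
      intros z Oz. destruct (classic (exists v, ltW v u /\ I v z)) as [[v [Hvu Iv]]|Hn].
      + exists v. split; [|exact Iv]. intros Hbv. apply Hu. destruct Hw as [_ [Htr _]]. eauto.
      + rewrite (HOx z Oz Hn). exists u; auto.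
    - intros [U [[_ HU] Ux]]. auto. }
  rewrite E. apply open_union. intros U [HU _]; exact HU.
Qed.

Lemma Lop_mono {X W} (ltW : W -> W -> Prop) (I : W -> X -> Prop) b1 b2 z :
  well_order ltW -> ~ ltW b2 b1 -> Lop ltW I b1 z -> Lop ltW I b2 z.
Proof.
  intros [Hirr [Htr [Htri _]]] H [u [Hu Iu]]. exists u. split; auto. intros H2.
  destruct (Htri b1 u) as [H3|[H3|H3]]; [auto| subst; auto | eauto].
Qed.

Lemma meet {X W} (t : topology X) (ltW : W -> W -> Prop) I : well_order ltW -> CB_levels t ltW I ->
  forall d z, I d z -> forall g, ltW g d -> forall V, open t V -> V z -> exists z', V z' /\ I g z'.
Proof.
  intros Hw HCB d. pose proof Hw as [Hirr [Htr [Htri Hwf]]].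
  induction d as [d IH] using (well_founded_induction Hwf).
  intros z Iz g Hgd V HV Vz.
  pose proof Iz as Iz'. apply HCB in Iz'. destruct Iz' as [Az [O [HO [Oz HOz]]]].
  assert (nIg : ~ I g z).
  { intros Ig. apply Az. exists g; auto. }
  assert (Ag : ~ exists v, ltW v g /\ I v z).
  { intros [v [Hv Iv]]. apply Az. exists v; eauto. }
  assert (Hni : ~ isolated_in t (fun y => ~ exists v, ltW v g /\ I v y) z).
  { intros Hi. apply nIg. apply HCB. exact Hi. }
  apply NNPP. intros Hno.
  apply Hni. split; [exact Ag|].
  exists (fun x => V x /\ O x). split; [apply open_inter; auto|]. split; [auto|].
  intros y [Vy Oy] Ay. apply NNPP. intros Hyz.
  assert (Ly : exists v, ltW v d /\ I v y).
  { apply NNPP. intros Hn. apply Hyz. apply HOz; auto. }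
  destruct Ly as [v [Hvd Iv]].
  destruct (Htri v g) as [H|[H|H]].
  - exfalso. apply Ay. exists v; auto.
  - subst. exfalso. apply Hno. exists y; auto.
  - destruct (IH v Hvd y Iv g H V HV Vy) as [z' Hz']. exfalso. apply Hno. exists z'; auto.
Qed.

Lemma below {W} (ltW : W -> W -> Prop) alpha Kp : cf_gt ltW alpha Kp -> exists u, ltW u alpha.
Proof.
  intros Hcf. apply NNPP. intros Hn. apply (Hcf (fun _ => False)).
  - split; [intros v []| intros u Hu; exfalso; apply Hn; eauto].
  - exists (fun p => False_rect Kp (proj2_sig p)). intros [x []].
Qed.

Lemma bounded {W} (ltW : W -> W -> Prop) alpha Kp (S : W -> Prop) : cf_gt ltW alpha Kp ->
  (forall v, S v -> ltW v alpha) -> card_le {v | S v} Kp ->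
  exists u, ltW u alpha /\ forall v, S v -> ltW v u.
Proof.
  intros Hcf HS Hc. apply NNPP. intros Hn. apply (Hcf S); [|exact Hc].
  split; [exact HS|]. intros u Hu. apply NNPP; intros Hn2. apply Hn. exists u. split; auto.
  intros v Sv. apply NNPP. intros Hv. apply Hn2. exists v; auto.
Qed.

Lemma wf_min {T} (R : T -> T -> Prop) (P : T -> Prop) : well_founded R ->
  (exists x, P x) -> exists x, P x /\ forall y, R y x -> ~ P y.
Proof.
  intros Hwf [x Px]. revert Px. induction x as [x IH] using (well_founded_induction Hwf).
  intros Px. destruct (classic (exists y, R y x /\ P y)) as [[y [Ry Py]]|Hn].
  - exact (IH y Ry Py).
  - exists x. split; auto. intros y Ry Py. apply Hn; eauto.
Qed.

Lemma enum {W A : Type} (ltW : W -> W -> Prop) (inh : inhabited A) (rho : W) : well_order ltW ->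
  (forall v, ltW v rho -> ~ card_le A {u | ltW u v}) ->
  exists h : W -> A, forall u v, ltW u rho -> ltW v rho -> h u = h v -> u = v.
Proof.
  intros Hw Hc. destruct Hw as [Hirr [Htr [Htri Hwf]]].
  pose (F := fun (v : W) (rec : forall u, ltW u v -> A) =>
     epsilon inh (fun a => forall u (H : ltW u v), a <> rec u H)).
  pose (h := Fix Hwf (fun _ => A) F).
  assert (Heq : forall v, h v = F v (fun u _ => h u)).
  { intros v. unfold h. apply (Fix_eq Hwf (fun _ => A) F). intros x f g Hfg. unfold F.
    assert (f = g) as ->.
    { apply functional_extensionality_dep; intro u. apply functional_extensionality_dep; intro H. apply Hfg. }
    reflexivity. }
  assert (Hnew : forall v, ltW v rho -> forall u, ltW u v -> h v <> h u).
  { intros v Hv. rewrite (Heq v).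
    assert (E : exists a, forall u (H : ltW u v), a <> h u).
    { apply NNPP. intros Hn. apply (Hc v Hv).
      assert (Ha : forall a, exists u, ltW u v /\ h u = a).
      { intros a. apply NNPP. intros Hn2. apply Hn. exists a. intros u Hu E. apply Hn2. eauto. }
      assert (Hs : forall a, {u | ltW u v /\ h u = a})
        by (intros a; apply constructive_indefinite_description; auto).
      exists (fun a => exist _ (proj1_sig (Hs a)) (proj1 (proj2_sig (Hs a)))).
      intros a1 a2 E. pose proof (f_equal (@proj1_sig _ _) E) as E1. simpl in E1.
      rewrite <- (proj2 (proj2_sig (Hs a1))), <- (proj2 (proj2_sig (Hs a2))), E1. reflexivity. }
    exact (epsilon_spec inh (fun a => forall u (H : ltW u v), a <> h u) E). }
  exists h. intros u v Hu Hv E.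
  destruct (Htri u v) as [H|[H|H]]; auto; exfalso.
  - exact (Hnew v Hv u H (eq_sym E)).
  - exact (Hnew u Hu v H E).
Qed.

Theorem proposition1p1
  (K : Type) (ltK : K -> K -> Prop) (Kp Kpp : Type)
  (W : Type) (ltW : W -> W -> Prop)
  (X : Type) (t : topology X) (I : W -> X -> Prop)
  (alpha : W) :
  infinite_regular_cardinal K ltK ->
  succ_card K Kp ->
  succ_card Kp Kpp ->
  well_order ltW ->
  (* eta > kappa^++ *)
  (exists w : W, card_le Kpp {v : W | ltW v w}) ->
  (* f = <kappa_xi : xi < eta> is the cardinal sequence of the LCS space X *)
  LCS t ->
  is_cardinal_sequence t ltW I ->
  (* cf(alpha) > kappa^+ *)
  cf_gt ltW alpha Kp ->
  (* a strictly increasing sequence <alpha_xi : xi < cf(alpha)> converging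
     to alpha with kappa_{alpha_xi} <= kappa *)
  (exists (C : Type) (ltC : C -> C -> Prop) (a : C -> W),
      well_order ltC /\
      (* the order type of C is cf(alpha) (given that a is cofinal below):
         C order-embeds into every cofinal subset of alpha *)
      (forall S : W -> Prop, cofinal_in ltW alpha S ->
         exists e : C -> {v : W | S v},
           forall x y, ltC x y -> ltW (proj1_sig (e x)) (proj1_sig (e y))) /\
      (forall x y, ltC x y -> ltW (a x) (a y)) /\
      (forall x, ltW (a x) alpha) /\
      (forall u, ltW u alpha -> exists x, ltW u (a x)) /\
      (forall x, card_le {y : X | I (a x) y} K)) ->
  card_le {y : X | I alpha y} K.
Proof.
  intros HK HKp HKpp Hw [w Hww] HLCS [HCB [_ _]] Hcf [C [ltC [a [HwC [_ [_ [Hax [Hcofa HaK]]]]]]]].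
  destruct HLCS as [Hlc [Hh _]].
  pose proof Hw as Hw'. destruct Hw' as [Hirr [Htr [Htri Hwf]]].
  destruct HKp as [[HKKp HnKpK] _].
  destruct HKpp as [[HKpKpp _] _].
  destruct HK as [_ [_ [HKinf _]]].
  apply NNPP. intros HnJ.
  destruct (wf_min ltW (fun v => ~ card_le {u | ltW u v} K) Hwf) as [rho [Hrho Hmin]].
  { exists w. intros Hc. apply HnKpK. eapply card_le_trans; [exact HKpKpp|].
    eapply card_le_trans; eauto. }
  assert (Hsmall : forall v, ltW v rho -> card_le {u | ltW u v} K).
  { intros v Hv. apply NNPP. apply Hmin; auto. }
  assert (HinhK : inhabited K).
  { apply NNPP. intros Hn. apply HKinf. exists nil. intros x _. apply Hn. constructor. exact x. }
  assert (HinhKp : inhabited Kp).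
  { destruct HinhK as [k]; destruct HKKp as [f _]; constructor; exact (f k). }
  destruct (enum ltW HinhKp rho Hw) as [hK HhK].
  { intros v Hv Hc. apply HnKpK. eapply card_le_trans; [exact Hc| apply Hsmall; auto]. }
  assert (HrhoKp : card_le {u | ltW u rho} Kp).
  { exists (fun p => hK (proj1_sig p)). intros p q E. apply sig_eq.
    apply HhK; [exact (proj2_sig p) | exact (proj2_sig q) | exact E]. }
  assert (HinhJ : inhabited {y : X | I alpha y}).
  { apply NNPP. intros Hn. apply HnJ. exists (fun p => False_rect K (Hn (inhabits p))).
    intros p. exfalso. apply Hn. constructor. exact p. }
  destruct (enum ltW HinhJ rho Hw) as [hJ HhJ].
  { intros v Hv Hc. apply HnJ. eapply card_le_trans; [exact Hc| apply Hsmall; auto]. }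
  pose (y := fun v => proj1_sig (hJ v)).
  assert (Hy : forall v, I alpha (y v)) by (intros v; exact (proj2_sig (hJ v))).
  assert (Hyinj : forall u v, ltW u rho -> ltW v rho -> y u = y v -> u = v).
  { intros u v Hu Hv E. apply HhJ; auto. apply sig_eq. exact E. }
  assert (Hnb : forall x, exists VQ : (X -> Prop) * (X -> Prop), I alpha x ->
     open t (fst VQ) /\ fst VQ x /\ compact t (snd VQ) /\ (forall z, fst VQ z -> snd VQ z) /\
     (forall z, snd VQ z -> (exists v, ltW v alpha /\ I v z) \/ z = x)).
  { intros x. destruct (classic (I alpha x)) as [Ix|nIx].
    2: { exists ((fun _ => True), (fun _ => True)). intros; contradiction. }
    pose proof Ix as Ix'. apply HCB in Ix'. destruct Ix' as [_ [U [HU [Ux HUx]]]].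
    destruct (regular_cpt t x U Hlc Hh HU Ux) as [V [Q [HV [Vx [HQ [HVQ HQU]]]]]].
    exists (V, Q). intros _. simpl. repeat split; auto.
    intros z Qz. destruct (classic (exists v, ltW v alpha /\ I v z)) as [H|H];
      [left; auto| right; apply HUx; auto]. }
  destruct (choice_fun _ Hnb) as [VQf HVQ].
  pose (Vf := fun x => fst (VQf x)).
  assert (Hpair : forall x x', I alpha x -> I alpha x' -> x <> x' ->
     exists b, ltW b alpha /\ forall z, Vf x z -> Vf x' z -> Lop ltW I b z).
  { intros x x' Ix Ix' Hne.
    destruct (HVQ x Ix) as [HV [Vx [HQ [HVQx HQx]]]].
    destruct (HVQ x' Ix') as [HV' [Vx' [HQ' [HVQx' HQx']]]].
    destruct (sep_compact t (snd (VQf x')) x Hh HQ') as [N [M [HN [HM [Nx [HQM Hd]]]]]].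
    { intros Qx. destruct (HQx' x Qx) as [[v [Hv Iv]]|E].
      - pose proof (level_unique t ltW I Hw HCB _ _ _ Iv Ix). subst. exact (Hirr _ Hv).
      - exact (Hne E). }
    destruct (HQ (fun P => (exists u, ltW u alpha /\ P = Lop ltW I u) \/ P = N)) as [l [Hl1 Hl2]].
    - intros P [[u [_ ->]]| ->]; [apply Lop_open; auto | exact HN].
    - intros z Qz. destruct (HQx z Qz) as [[v [Hv Iv]]| ->].
      + exists (Lop ltW I v). split; [left; exists v; auto|]. exists v; split; auto.
      + exists N; auto.
    - assert (Hb : exists b, ltW b alpha /\ forall P, In P l -> forall z, P z -> N z \/ Lop ltW I b z).
      { clear Hl2. induction l as [|P l IH].
        - destruct (below ltW alpha Kp Hcf) as [b0 Hb0]. exists b0. split; auto. intros P [].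
        - destruct (IH (fun Q0 HQ0 => Hl1 Q0 (or_intror HQ0))) as [b [Hb HbP]].
          destruct (Hl1 P (or_introl eq_refl)) as [[u [Hu ->]]| ->].
          + destruct (classic (ltW b u)) as [Hbu|Hbu].
            * exists u. split; auto. intros P' [<-|HP'] z Pz; [right; auto|].
              destruct (HbP P' HP' z Pz) as [H|H]; [left; auto| right].
              apply (Lop_mono ltW I b u z Hw); auto. intros Hub. exact (Hirr _ (Htr _ _ _ Hbu Hub)).
            * exists b. split; auto. intros P' [<-|HP'] z Pz.
              { right. apply (Lop_mono ltW I u b z Hw); auto. }
              exact (HbP P' HP' z Pz).
          + exists b. split; auto. intros P' [<-|HP'] z Pz; [left; auto|]. exact (HbP P' HP' z Pz). }
      destruct Hb as [b [Hb HbP]]. exists b. split; auto.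
      intros z Vz Vz'. destruct (Hl2 z (HVQx z Vz)) as [P [InP Pz]].
      destruct (HbP P InP z Pz) as [Nz|Lz]; auto. exfalso. eapply Hd; eauto. }
  assert (Hbf : exists b : W -> W -> W, forall u v, ltW u rho -> ltW v rho -> u <> v ->
       ltW (b u v) alpha /\ forall z, Vf (y u) z -> Vf (y v) z -> Lop ltW I (b u v) z).
  { assert (H : forall p : W * W, exists c, ltW (fst p) rho -> ltW (snd p) rho -> fst p <> snd p ->
        ltW c alpha /\ forall z, Vf (y (fst p)) z -> Vf (y (snd p)) z -> Lop ltW I c z).
    { intros [u v]. simpl. destruct (classic (ltW u rho /\ ltW v rho /\ u <> v)) as [[Hu [Hv Huv]]|Hn].
      - assert (Hne : y u <> y v) by (intros E; apply Huv; apply Hyinj; auto).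
        destruct (Hpair (y u) (y v) (Hy u) (Hy v) Hne) as [c Hc].
        exists c. intros; auto.
      - exists alpha. intros Hu Hv Huv. exfalso. auto. }
    destruct (choice_fun _ H) as [f Hf]. exists (fun u v => f (u, v)).
    intros u v Hu Hv Huv. exact (Hf (u, v) Hu Hv Huv). }
  destruct Hbf as [b Hb].
  assert (Hgf : exists g : W -> W, forall v, ltW v rho ->
      ltW (g v) alpha /\ forall u, ltW u v -> ltW (b u v) (g v)).
  { assert (H : forall v, exists c, ltW v rho -> ltW c alpha /\ forall u, ltW u v -> ltW (b u v) c).
    { intros v. destruct (classic (ltW v rho)) as [Hv|Hv]; [|exists alpha; intros; contradiction].
      destruct (bounded ltW alpha Kp (fun c => exists u, ltW u v /\ c = b u v) Hcf) as [c [Hc1 Hc2]].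
      - intros c [u [Hu ->]].
        assert (Huv : u <> v) by (intros E; subst; exact (Hirr _ Hu)).
        destruct (Hb u v (Htr _ _ _ Hu Hv) Hv Huv) as [H1 _]; exact H1.
      - eapply card_le_trans; [apply (card_le_image (fun u => ltW u v) (fun u => b u v))|].
        eapply card_le_trans; [apply Hsmall; exact Hv| exact HKKp].
      - exists c. intros _. split; auto. intros u Hu. apply Hc2. exists u; auto. }
    exact (choice_fun _ H). }
  destruct Hgf as [g Hg].
  destruct (bounded ltW alpha Kp (fun c => exists v, ltW v rho /\ c = g v) Hcf) as [d [Hd1 Hd2]].
  - intros c [v [Hv ->]]. apply Hg; auto.
  - eapply card_le_trans; [apply (card_le_image (fun v => ltW v rho) g)| exact HrhoKp].
  - destruct (Hcofa d Hd1) as [x Hx].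
    assert (Hgam : ltW (a x) alpha) by apply Hax.
    assert (Hzf : exists zf : W -> X, forall v, ltW v rho -> Vf (y v) (zf v) /\ I (a x) (zf v)).
    { assert (H : forall v, exists z, ltW v rho -> Vf (y v) z /\ I (a x) z).
      { intros v. destruct (HVQ (y v) (Hy v)) as [HV [Vy _]].
        destruct (meet t ltW I Hw HCB alpha (y v) (Hy v) (a x) Hgam (Vf (y v)) HV Vy) as [z Hz].
        exists z; auto. }
      exact (choice_fun _ H). }
    destruct Hzf as [zf Hzf].
    assert (key : forall u v, ltW u rho -> ltW v rho -> ltW u v -> zf u = zf v -> False).
    { intros u v Hu Hv Huv E.
      destruct (Hzf u Hu) as [Vu Iu]. destruct (Hzf v Hv) as [Vv Iv].
      assert (Hne : u <> v) by (intros E'; subst; exact (Hirr _ Huv)).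
      destruct (Hb u v Hu Hv Hne) as [_ HL].
      rewrite E in Vu.
      destruct (HL (zf v) Vu Vv) as [w' [Hw' Iw']].
      pose proof (level_unique t ltW I Hw HCB _ _ _ Iw' Iv). subst w'.
      apply Hw'. apply (Htr _ (g v)). { apply Hg; auto. }
      apply (Htr _ d); auto. apply Hd2. exists v; auto. }
    apply Hrho. eapply card_le_trans; [|exact (HaK x)].
    exists (fun p : {u | ltW u rho} =>
      exist (fun z => I (a x) z) (zf (proj1_sig p)) (proj2 (Hzf _ (proj2_sig p)))).
    intros [u Hu] [v Hv] E. apply sig_eq. simpl.
    pose proof (f_equal (@proj1_sig _ _) E) as E1. simpl in E1.
    destruct (Htri u v) as [H|[H|H]]; auto; exfalso; [exact (key u v Hu Hv H E1)| exact (key v u Hv Hu H (eq_sym E1))].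
Qed.
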